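(* For every 5-complex number $u$, $$e^u=e_+e^{v_+}+e^{v_1}\left(e_1\cos\tilde v_1+\tilde e_1\sin\tilde v_1\right)+e^{v_2}\left(e_2\cos\tilde v_2+\tilde e_2\sin\tilde v_2\right),$$ where $e^u=\sum_{n\ge0}u^n/n!$.
   Context: A 5-complex number is $u=x_0+h_1x_1+h_2x_2+h_3x_3+h_4x_4$ with real $x_j$, with componentwise addition and the commutative associative bilinear multiplication determined by $h_jh_k=h_{(j+k)\bmod 5}$, $h_0=1$. Canonical variables: $v_+=\sum_jx_j$ and, for $k=1,2$, $v_k=\sum_jx_j\cos(2\pi kj/5)$, $\tilde v_k=\sum_jx_j\sin(2\pi kj/5)$. Canonical basis (with $h_0=1$): $e_+=\frac15\sum_{j=0}^4h_j$, and for $k=1,2$: $e_k=\frac25\sum_{j=0}^4\cos(2\pi kj/5)h_j$, $\tilde e_k=\frac25\sum_{j=0}^4\sin(2\pi kj/5)h_j$. *)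

(* Defs.v *)
From mathcomp Require Import all_boot all_order all_algebra.
From mathcomp Require Import all_classical all_reals all_analysis.
Set Implicit Arguments. Unset Strict Implicit. Unset Printing Implicit Defensive.
Import Order.TTheory GRing.Theory Num.Theory.
Local Open Scope ring_scope.

Section Cx5.
Variable R : realType.

(* A 5-complex number u = x_0 + h_1 x_1 + ... + h_4 x_4 is represented by
   its coordinate function j |-> x_j (j : 'I_5). *)
Definition cx5 := 'I_5 -> R.

Definition cx5_h (j : 'I_5) : cx5 := fun i => if i == j then 1 else 0.

Definition cx5_one : cx5 := cx5_h ord0.

(* bilinear multiplication with h_j h_l = h_{(j+l) mod 5} *)
Definition cx5_mul (u w : cx5) : cx5 :=
  fun k => \sum_(j < 5) \sum_(l < 5)
             (if ((j + l) %% 5)%N == (k : nat) then u j * w l else 0).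

Definition cx5_pow (u : cx5) (n : nat) : cx5 := iter n (cx5_mul u) cx5_one.

Definition ang (k j : nat) : R := 2 * pi * k%:R * j%:R / 5.

Definition vplus (u : cx5) : R := \sum_(j < 5) u j.
Definition vk (k : nat) (u : cx5) : R := \sum_(j < 5) u j * cos (ang k j).
Definition tvk (k : nat) (u : cx5) : R := \sum_(j < 5) u j * sin (ang k j).

Definition eplus : cx5 := fun j => 1 / 5.
Definition ek (k : nat) : cx5 := fun j => 2 / 5 * cos (ang k j).
Definition tek (k : nat) : cx5 := fun j => 2 / 5 * sin (ang k j).

Definition cx5_exp_rhs (u : cx5) : cx5 := fun j =>
  eplus j * expR (vplus u)
  + expR (vk 1 u) * (ek 1 j * cos (tvk 1 u) + tek 1 j * sin (tvk 1 u))
  + expR (vk 2 u) * (ek 2 j * cos (tvk 2 u) + tek 2 j * sin (tvk 2 u)).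

End Cx5.

(* Main.v *)
Require Import Defs.
From mathcomp Require Import all_boot all_order all_algebra.
From mathcomp Require Import all_classical all_reals all_analysis.
From mathcomp Require Import complex.
From mathcomp Require Import ring lra.
Import Order.TTheory GRing.Theory Num.Theory.
Import numFieldNormedType.Exports.
Local Open Scope ring_scope.
Local Open Scope classical_set_scope.

Section Trig.
Variable R : realType.

Definition c5 (n : nat) : R := cos (2 * pi * n%:R / 5).
Definition s5 (n : nat) : R := sin (2 * pi * n%:R / 5).

Lemma arg5_mod n : (2 * pi * n%:R / 5 : R) =
  2 * pi * (n %% 5)%:R / 5 + (pi *+ 2) *+ (n %/ 5).
Proof.
rewrite {1}(divn_eq n 5) natrD natrM -mulr_natr -[pi *+ 2]mulr_natr.
by field.
Qed.

Lemma c5_mod n : c5 n = c5 (n %% 5).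
Proof. by rewrite /c5 arg5_mod periodicn //; apply: cosD2pi. Qed.
Lemma s5_mod n : s5 n = s5 (n %% 5).
Proof. by rewrite /s5 arg5_mod periodicn //; apply: sinD2pi. Qed.

Lemma c5D m n : c5 (m + n) = c5 m * c5 n - s5 m * s5 n.
Proof. rewrite /c5 /s5 -cosD natrD; congr cos; by field. Qed.
Lemma s5D m n : s5 (m + n) = s5 m * c5 n + c5 m * s5 n.
Proof. rewrite /c5 /s5 -sinD natrD; congr sin; by field. Qed.

Lemma c5_0 : c5 0 = 1.
Proof. by rewrite /c5 mulr0 mul0r cos0. Qed.
Lemma s5_0 : s5 0 = 0.
Proof. by rewrite /s5 mulr0 mul0r sin0. Qed.

Lemma arg5_neg n : (n <= 5)%N -> (2 * pi * (5 - n)%:R / 5 : R) = - (2 * pi * n%:R / 5) + pi *+ 2.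
Proof. move=> h; rewrite natrB // -mulr_natr; by field. Qed.

Lemma c5_3 : c5 3 = c5 2.
Proof.
rewrite /c5 (_ : 3%N = 5 - 2)%N // arg5_neg // cosD2pi cosN //.
Qed.
Lemma c5_4 : c5 4 = c5 1.
Proof.
rewrite /c5 (_ : 4%N = 5 - 1)%N // arg5_neg // cosD2pi cosN //.
Qed.

Lemma s5_1_gt0 : 0 < s5 1.
Proof.
rewrite /s5; apply: sin_gt0_pi; apply/andP; split.
  have := pi_gt0 R; rewrite mulr1; lra.
have := pi_gt0 R; rewrite mulr1; lra.
Qed.

Lemma c5_sum : 1 + 2 * c5 1 + 2 * c5 2 = 0.
Proof.
have hsc : s5 1 ^+ 2 = 1 - c5 1 ^+ 2 by rewrite /s5 /c5 sin2cos2.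
have h2 : c5 2 = 2 * c5 1 ^+ 2 - 1.
  by rewrite (_ : 2%N = 1 + 1)%N // c5D -!expr2 hsc; ring.
have h3 : c5 3 = c5 2 * c5 1 - s5 2 * s5 1 by rewrite (_ : 3%N = 2 + 1)%N // c5D.
have hs2 : s5 2 = 2 * s5 1 * c5 1.
  by rewrite (_ : 2%N = 1 + 1)%N // s5D; ring.
rewrite c5_3 hs2 h2 in h3.
have hs := s5_1_gt0.
have hc1 : c5 1 != 1.
  apply/eqP => h; move: hsc; rewrite h expr1n subrr => /eqP.
  by rewrite sqrf_eq0 gt_eqF.
have : (c5 1 - 1) * (4 * c5 1 ^+ 2 + 2 * c5 1 - 1) = 0.
  rewrite -[LHS]subr0 -{2}(subrr (2 * c5 1 ^+ 2 - 1)).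
  rewrite {1}h3. 
  have -> : (2 * c5 1 ^+ 2 - 1) * c5 1 - 2 * s5 1 * c5 1 * s5 1 =
            (2 * c5 1 ^+ 2 - 1) * c5 1 - 2 * (s5 1 ^+ 2) * c5 1 by ring.
  rewrite hsc; ring.
move/eqP; rewrite mulf_eq0 subr_eq0 (negbTE hc1) /= => /eqP h.
rewrite h2; lra.
Qed.

End Trig.

Set Implicit Arguments. Unset Strict Implicit. Unset Printing Implicit Defensive.

Section Chars.
Variable R : realType.
Local Notation C := (R[i]).

Definition rho (k j : nat) : C := (c5 R (k * j) +i* s5 R (k * j))%C.
Definition chi (k : nat) (u : cx5 R) : C := \sum_(j < 5) (u j)%:C%C * rho k j.

Lemma cos_ang k j : cos (ang R k j) = c5 R (k * j).
Proof. by rewrite /ang /c5 natrM mulrA. Qed.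
Lemma sin_ang k j : sin (ang R k j) = s5 R (k * j).
Proof. by rewrite /ang /s5 natrM mulrA. Qed.

Lemma rho_mod k n : rho k (n %% 5) = rho k n.
Proof.
by rewrite /rho c5_mod s5_mod modnMmr -c5_mod -s5_mod.
Qed.

Lemma rhoD k m n : rho k (m + n) = rho k m * rho k n.
Proof.
rewrite /rho mulnDr c5D s5D.
by simpc; rewrite [X in (_ +i* X)%C]addrC.
Qed.

Lemma sum_ite5 k (n : nat) (X : R) :
  \sum_(m < 5) (if (n %% 5 == m)%N then X else 0)%:C%C * rho k m = X%:C%C * rho k (n %% 5).
Proof.
have lt : (n %% 5 < 5)%N by rewrite ltn_pmod.
rewrite (bigD1 (Ordinal lt)) //= eqxx big1 ?addr0 // => m hm.
rewrite ifF ?mul0r //; apply: contraNF hm => /eqP h.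
by apply/eqP/val_inj => /=; rewrite h.
Qed.

Lemma chi_mul k u w : chi k (cx5_mul u w) = chi k u * chi k w.
Proof.
rewrite /chi /cx5_mul.
transitivity (\sum_(j < 5) \sum_(l < 5) (u j * w l)%:C%C * rho k ((j + l) %% 5)).
  under eq_bigr => m _ do rewrite rmorph_sum mulr_suml.
  rewrite exchange_big; apply: eq_bigr => j _.
  under eq_bigr => m _ do rewrite rmorph_sum mulr_suml.
  rewrite exchange_big; apply: eq_bigr => l _.
  exact: sum_ite5.
rewrite mulr_suml; apply: eq_bigr => j _; rewrite mulr_sumr; apply: eq_bigr => l _.
by rewrite rho_mod rhoD rmorphM /=; ring.
Qed.

Lemma chi_one k : chi k (cx5_one R) = 1.
Proof.
rewrite /chi (bigD1 ord0) //= big1 ?addr0.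
  by rewrite /cx5_one /cx5_h eqxx mul1r /rho muln0 c5_0 s5_0.
by move=> m hm; rewrite /cx5_one /cx5_h (negbTE hm) mul0r.
Qed.

Lemma chi_pow k u n : chi k (cx5_pow u n) = chi k u ^+ n.
Proof.
elim: n => [|n IH]; first by rewrite expr0 chi_one.
by rewrite /cx5_pow iterS -/(cx5_pow u n) chi_mul IH exprS.
Qed.

Lemma ReD (x y : C) : complex.Re (x + y) = complex.Re x + complex.Re y.
Proof. by case: x; case: y. Qed.
Lemma ImD (x y : C) : complex.Im (x + y) = complex.Im x + complex.Im y.
Proof. by case: x; case: y. Qed.

Lemma Re_chi k u : complex.Re (chi k u) = vk k u.
Proof.
rewrite /chi /vk (big_morph (@complex.Re R) ReD (erefl _)).
apply: eq_bigr => j _; rewrite /rho cos_ang; by simpc.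
Qed.
Lemma Im_chi k u : complex.Im (chi k u) = tvk k u.
Proof.
rewrite /chi /tvk (big_morph (@complex.Im R) ImD (erefl _)).
apply: eq_bigr => j _; rewrite /rho sin_ang; by simpc.
Qed.

Lemma chi0 u : chi 0 u = (vplus u)%:C%C.
Proof.
rewrite /chi /vplus rmorph_sum; apply: eq_bigr => j _.
by rewrite /rho mul0n c5_0 s5_0 mulr1.
Qed.

Lemma cosB5 k (j m : 'I_5) :
  cos (ang R k j) * cos (ang R k m) + sin (ang R k j) * sin (ang R k m)
  = c5 R ((k * (j + 5 - m)) %% 5).
Proof.
rewrite -c5_mod /c5 /ang natrM natrB; last by rewrite (leq_trans (ltnW (ltn_ord m))) // leq_addl.
rewrite natrD.
rewrite (_ : 2 * pi * (k%:R * (j%:R + 5%:R - m%:R)) / 5 =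
   (2 * pi * k%:R * j%:R / 5 + - (2 * pi * k%:R * m%:R / 5)) + (pi *+ 2) *+ k); last first.
  by rewrite -mulrnA -mulr_natr; field.
by rewrite periodicn; [rewrite cosD cosN sinN; ring | apply: cosD2pi].
Qed.

Lemma kernel (j m : 'I_5) :
  eplus R j * cos (ang R 0 m) + ek R 1 j * cos (ang R 1 m) + tek R 1 j * sin (ang R 1 m)
  + ek R 2 j * cos (ang R 2 m) + tek R 2 j * sin (ang R 2 m) = (j == m)%:R.
Proof.
have -> : cos (ang R 0 m) = 1 by rewrite cos_ang mul0n c5_0.
rewrite (_ : _ + _ = 1 / 5 + 2 / 5 * c5 R ((1 * (j + 5 - m)) %% 5)
     + 2 / 5 * c5 R ((2 * (j + 5 - m)) %% 5)); last first.
  by rewrite -!cosB5 /ek /tek /eplus; ring.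
have hs := c5_sum R.
case: j m => [[|[|[|[|[|?]]]]] ?] [[|[|[|[|[|?]]]]] ?] //=;
  rewrite ?c5_3 ?c5_4 ?c5_0; lra.
Qed.

Lemma inversion u (j : 'I_5) :
  u j = eplus R j * vk 0 u + ek R 1 j * vk 1 u + tek R 1 j * tvk 1 u
        + ek R 2 j * vk 2 u + tek R 2 j * tvk 2 u.
Proof.
rewrite /vk /tvk !mulr_sumr -!big_split /=.
transitivity (\sum_(m < 5) u m * (j == m)%:R).
  rewrite (bigD1 j) //= eqxx mulr1 big1 ?addr0 // => m hm.
  by rewrite eq_sym (negbTE hm) mulr0.
apply: eq_bigr => m _; rewrite -kernel; ring.
Qed.

Lemma pow_formula u n (j : 'I_5) :
  cx5_pow u n j = eplus R j * vplus u ^+ n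
   + ek R 1 j * complex.Re (chi 1 u ^+ n) + tek R 1 j * complex.Im (chi 1 u ^+ n)
   + ek R 2 j * complex.Re (chi 2 u ^+ n) + tek R 2 j * complex.Im (chi 2 u ^+ n).
Proof.
rewrite {1}inversion -!Re_chi -!Im_chi !chi_pow chi0 -rmorphXn.
by [].
Qed.

End Chars.

Section Gen.
Variable F : numFieldType.
Implicit Types x y : F.

Definition EE N x := \sum_(0 <= n < N) x ^+ n / n`!%:R.

Lemma fact_neq0 n : (n`!%:R : F) != 0.
Proof. by rewrite pnatr_eq0 -lt0n fact_gt0. Qed.

Lemma binom_fact x y n : (x + y) ^+ n / n`!%:R =
  \sum_(0 <= i < n.+1) x ^+ i * y ^+ (n - i) / (i`!%:R * (n - i)`!%:R).
Proof.
rewrite addrC exprDn big_mkord mulr_suml; apply: eq_bigr => i _.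
have hi : (i <= n)%N by rewrite -ltnS ltn_ord.
rewrite -(bin_fact hi) !natrM -mulr_natr.
have h1 := fact_neq0 i; have h2 := fact_neq0 (n - i).
have h3 : ('C(n, i)%:R : F) != 0 by rewrite pnatr_eq0 -lt0n bin_gt0.
by field; rewrite h1 h2 h3.
Qed.

Lemma Etri N x y : EE N (x + y) =
  \sum_(0 <= i < N) \sum_(0 <= j < N - i) x ^+ i * y ^+ j / (i`!%:R * j`!%:R).
Proof.
elim: N => [|N IH]; first by rewrite /EE !big_geq.
rewrite /EE big_nat_recr //= -/(EE N (x + y)) IH binom_fact.
rewrite [in RHS]big_nat_recr //= subSnn big_nat1.
rewrite [X in _ + X = _]big_nat_recr //= subnn.
rewrite addrA; congr (_ + _).
rewrite -big_split; apply: eq_big_nat => i /andP [_ hi] /=.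
by rewrite subSn ?(ltnW hi) // big_nat_recr.
Qed.

Lemma Dform N x y : EE N x * EE N y - EE N (x + y) =
  \sum_(0 <= i < N) \sum_(N - i <= j < N) x ^+ i * y ^+ j / (i`!%:R * j`!%:R).
Proof.
rewrite Etri /EE mulr_suml -sumrB; apply: eq_big_nat => i /andP [_ hi] /=.
rewrite mulr_sumr (@big_cat_nat _ _ _ (N - i) 0 N) ?leq_subr //=.
have e : forall j, x ^+ i / i`!%:R * (y ^+ j / j`!%:R) = x ^+ i * y ^+ j / (i`!%:R * j`!%:R).
  by move=> j; rewrite invfM; ring.
under eq_bigr => j _ do rewrite e.
under [X in _ + X - _]eq_bigr => j _ do rewrite e.
by rewrite addrC addKr.
Qed.

Lemma Dbound N x y : `|EE N x * EE N y - EE N (x + y)| <=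
  EE N `|x| * EE N `|y| - EE N (`|x| + `|y|).
Proof.
rewrite !Dform; apply: (le_trans (ler_norm_sum _ _ _)); apply: ler_sum => i _.
apply: (le_trans (ler_norm_sum _ _ _)); apply: ler_sum => j _.
by rewrite normrM normfV !normrM !normrX !normr_nat.
Qed.

End Gen.

Section An.
Variable R : realType.
Local Notation C := (R[i]).

Lemma ReMr (w : C) (r : R) : complex.Re (w * r%:C%C) = complex.Re w * r.
Proof. by case: w => a b; simpc. Qed.
Lemma ImMr (w : C) (r : R) : complex.Im (w * r%:C%C) = complex.Im w * r.
Proof. by case: w => a b; simpc. Qed.
Lemma ReMl (w : C) (r : R) : complex.Re (r%:C%C * w) = r * complex.Re w.
Proof. by case: w => a b; simpc. Qed.
Lemma ImMl (w : C) (r : R) : complex.Im (r%:C%C * w) = r * complex.Im w.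
Proof. by case: w => a b; simpc. Qed.

Lemma Re_divn (w : C) n : complex.Re (w / n%:R) = complex.Re w / n%:R.
Proof. by rewrite -(rmorph_nat (real_complex R)) -fmorphV ReMr. Qed.
Lemma Im_divn (w : C) n : complex.Im (w / n%:R) = complex.Im w / n%:R.
Proof. by rewrite -(rmorph_nat (real_complex R)) -fmorphV ImMr. Qed.

Lemma ReE N (z : C) : complex.Re (EE N z) = \sum_(0 <= n < N) complex.Re (z ^+ n) / n`!%:R.
Proof.
rewrite /EE (big_morph (@complex.Re R) (@ReD R) (erefl _)).
by apply: eq_bigr => n _; rewrite Re_divn.
Qed.
Lemma ImE N (z : C) : complex.Im (EE N z) = \sum_(0 <= n < N) complex.Im (z ^+ n) / n`!%:R.
Proof.
rewrite /EE (big_morph (@complex.Im R) (@ImD R) (erefl _)).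
by apply: eq_bigr => n _; rewrite Im_divn.
Qed.

Lemma EE_real N (a : R) : EE N (a%:C%C) = (EE N a)%:C%C.
Proof.
rewrite /EE rmorph_sum; apply: eq_bigr => n _.
by rewrite fmorph_div rmorphXn rmorph_nat.
Qed.

Definition Pi (b : R) n : C :=
  (((~~ odd n)%:R * (-1) ^+ n./2 * b ^+ n) +i* ((odd n)%:R * (-1) ^+ n.-1./2 * b ^+ n))%C.

Lemma powi (b : R) n : (0 +i* b)%C ^+ n = Pi b n.
Proof.
suff : (0 +i* b)%C ^+ n = Pi b n /\ (0 +i* b)%C ^+ n.+1 = Pi b n.+1 by case.
elim: n => [|n [IH1 IH2]].
  by split; rewrite ?expr0 ?expr1 /Pi /=; simpc; rewrite ?expr1.
split => //.
rewrite 2!exprS IH1 /Pi; simpc.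
case: n {IH1 IH2} => [|n] /=.
  by congr Complex; rewrite /= ?expr0 ?expr1; ring.
by rewrite !negbK !exprS; congr Complex; ring.
Qed.


Lemma Re_Ei N (b : R) : complex.Re (EE N (0 +i* b)%C) = series (cos_coeff b) N.
Proof. by rewrite ReE /series /=; apply: eq_bigr => n _; rewrite powi. Qed.
Lemma Im_Ei N (b : R) : complex.Im (EE N (0 +i* b)%C) = series (sin_coeff b) N.
Proof. by rewrite ImE /series /=; apply: eq_bigr => n _; rewrite powi. Qed.

Lemma norm_real (a : R) : `|a%:C%C| = (`|a|)%:C%C.
Proof. by rewrite normc_def /= expr0n addr0 sqrtr_sqr. Qed.
Lemma norm_imag (b : R) : `|(0 +i* b)%C| = (`|b|)%:C%C.
Proof. by rewrite normc_def /= expr0n add0r sqrtr_sqr. Qed.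

Lemma Re_le (w : C) r : `|w| <= r%:C%C -> `|complex.Re w| <= r.
Proof.
rewrite normc_def lecR; apply: le_trans.
rewrite -sqrtr_sqr ler_sqrt ?addr_ge0 ?sqr_ge0 //.
by rewrite lerDl sqr_ge0.
Qed.
Lemma Im_le (w : C) r : `|w| <= r%:C%C -> `|complex.Im w| <= r.
Proof.
rewrite normc_def lecR; apply: le_trans.
rewrite -sqrtr_sqr ler_sqrt ?addr_ge0 ?sqr_ge0 //.
by rewrite lerDr sqr_ge0.
Qed.

Lemma cvg_EE (a : R) : (fun N => EE N a) @ \oo --> expR a.
Proof.
rewrite (_ : (fun N => EE N a) = series (exp_coeff a)).
  exact: is_cvg_series_exp_coeff.
by apply/funext => N; rewrite /series /exp_coeff /EE /=.
Qed.

Lemma cvg_cos_series (b : R) : series (cos_coeff b) @ \oo --> cos b.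
Proof. rewrite unlock; exact: is_cvg_series_cos_coeff. Qed.
Lemma cvg_sin_series (b : R) : series (sin_coeff b) @ \oo --> sin b.
Proof. rewrite unlock; exact: is_cvg_series_sin_coeff. Qed.

Lemma bound0 (f g : nat -> R) : (forall N, `|f N| <= g N) ->
  g @ \oo --> (0 : R) -> f @ \oo --> (0 : R).
Proof.
move=> hb hg.
have hn : (fun N => - g N) @ \oo --> (0 : R) by rewrite -oppr0; apply: cvgN.
apply: (squeeze_cvgr _ hn hg).
by apply: filterE => N; rewrite -ler_norml.
Qed.

Lemma ReB (x y : C) : complex.Re (x - y) = complex.Re x - complex.Re y.
Proof. by case: x; case: y. Qed.
Lemma ImB (x y : C) : complex.Im (x - y) = complex.Im x - complex.Im y.
Proof. by case: x; case: y. Qed.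

Lemma cvg_ReIm (z : C) :
  ((fun N => complex.Re (EE N z)) @ \oo --> expR (complex.Re z) * cos (complex.Im z)) /\
  ((fun N => complex.Im (EE N z)) @ \oo --> expR (complex.Re z) * sin (complex.Im z)).
Proof.
case: z => a b /=.
pose x : C := a%:C%C; pose y : C := (0 +i* b)%C.
have hz : (a +i* b)%C = x + y by rewrite /x /y; simpc.
pose D N := EE N x * EE N y - EE N (x + y).
pose Dr N := EE N `|a| * EE N `|b| - EE N (`|a| + `|b|).
have eq N : EE N (a +i* b)%C = (EE N a)%:C%C * EE N y - D N.
  by rewrite /D hz -EE_real /x opprB addrCA subrr addr0.
have hb N : `|D N| <= (Dr N)%:C%C.
  apply: le_trans (Dbound N x y) _; rewrite /x /y norm_real norm_imag /Dr.
  by rewrite rmorphB rmorphM /= -!EE_real rmorphD.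
have hDr : Dr @ \oo --> (0 : R).
  rewrite -(subrr (expR (`|a| + `|b|))) {1}expRD.
  by apply: cvgB; [apply: cvgM|]; apply: cvg_EE.
split.
  rewrite -[X in _ --> X]subr0.
  have -> : (fun N => complex.Re (EE N (a +i* b)%C)) = (fun N => EE N a * series (cos_coeff b) N - complex.Re (D N)).
    by apply/funext => N; rewrite eq ReB ReMl Re_Ei.
  apply: cvgB; first by apply: cvgM; [apply: cvg_EE | apply: cvg_cos_series].
  by apply: (bound0 _ hDr) => N; apply: Re_le.
rewrite -[X in _ --> X]subr0.
have -> : (fun N => complex.Im (EE N (a +i* b)%C)) = (fun N => EE N a * series (sin_coeff b) N - complex.Im (D N)).
  by apply/funext => N; rewrite eq ImB ImMl Im_Ei.
apply: cvgB; first by apply: cvgM; [apply: cvg_EE | apply: cvg_sin_series].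
by apply: (bound0 _ hDr) => N; apply: Im_le.
Qed.


End An.

Theorem mainTheorem8 (R : realType) (u : cx5 R) :
  forall j : 'I_5,
    (series (fun n : nat => cx5_pow u n j / (n`!)%:R) : R^nat) @ \oo --> (cx5_exp_rhs u j : R).
Proof.
move=> j.
have [h1r h1i] := cvg_ReIm (chi 1 u); have [h2r h2i] := cvg_ReIm (chi 2 u).
rewrite !Re_chi !Im_chi in h1r h1i h2r h2i.
have e : series (fun n : nat => cx5_pow u n j / (n`!)%:R) = fun N =>
   eplus R j * EE N (vplus u) + ek R 1 j * complex.Re (EE N (chi 1 u))
   + tek R 1 j * complex.Im (EE N (chi 1 u)) + ek R 2 j * complex.Re (EE N (chi 2 u))
   + tek R 2 j * complex.Im (EE N (chi 2 u)).
  apply/funext => N; rewrite /series /= !ReE !ImE /EE !mulr_sumr -!big_split /=.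
  by apply: eq_bigr => n _; rewrite pow_formula; ring.
rewrite e.
have -> : cx5_exp_rhs u j = eplus R j * expR (vplus u)
   + ek R 1 j * (expR (vk 1 u) * cos (tvk 1 u)) + tek R 1 j * (expR (vk 1 u) * sin (tvk 1 u))
   + ek R 2 j * (expR (vk 2 u) * cos (tvk 2 u)) + tek R 2 j * (expR (vk 2 u) * sin (tvk 2 u)).
  by rewrite /cx5_exp_rhs; ring.
apply: cvgD; last by apply: cvgM; [exact: cvg_cst | exact: h2i].
apply: cvgD; last by apply: cvgM; [exact: cvg_cst | exact: h2r].
apply: cvgD; last by apply: cvgM; [exact: cvg_cst | exact: h1i].
apply: cvgD; last by apply: cvgM; [exact: cvg_cst | exact: h1r].
by apply: cvgM; [exact: cvg_cst | exact: cvg_EE].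
Qed.
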